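(* For $D=(\mu,\mathcal{A},\mathcal{B},\mathcal{F})\in\mathcal{BV}(\Omega)$ let $\Theta_D:=\frac{|\mathcal{B}|^2}{1-|\mu|^2}\,dx\,dy$. Then: (i) for every gauge $\phi$ on $\Omega$ and every $D\in\mathcal{BV}(\Omega)$, $\Theta_{\phi\cdot D}=\Theta_D$ on $\Omega$; (ii) for every diffeomorphism $\Phi:\Omega_1\to\Omega_2$ and every $D\in\mathcal{BV}(\Omega_2)$, $\Theta_{\Phi^*D}=\Phi^*\Theta_D$ on $\Omega_1$, where for a 2-form $f\,dx\,dy$ on $\Omega_2$ its pullback is $\Phi^*(f\,dx\,dy)=(f\circ\Phi)\,J\,dx\,dy$ with $J=|\Phi_z|^2-|\Phi_{\bar z}|^2$.
   Context: A domain is an open connected subset of $\mathbb{C}$, $z=x+iy$. $\mathcal{BV}(\Omega)$ is the set of quadruples $(\mu,\mathcal{A},\mathcal{B},\mathcal{F})$ of continuous complex functions on $\Omega$ with $|\mu|<1$ pointwise (encoding $w_{\bar z}-\mu w_z+\mathcal{A}w+\mathcal{B}\bar w=\mathcal{F}$). Gauge action: for a $C^1$ nowhere-vanishing $\phi$ on $\Omega$, $\phi\cdot(\mu,\mathcal{A},\mathcal{B},\mathcal{F})=(\mu,\ \mathcal{A}-\phi_{\bar z}/\phi+\mu\phi_z/\phi,\ \mathcal{B}\phi/\bar\phi,\ \phi\mathcal{F})$. Diffeomorphism: $C^1$ bijection $\Phi:\Omega_1\to\Omega_2$ with $C^1$ inverse and $J=|\Phi_z|^2-|\Phi_{\bar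 z}|^2>0$; for $D\in\mathcal{BV}(\Omega_2)$, with $K=\Phi_z+(\mu\circ\Phi)\overline{\Phi_{\bar z}}$ (nowhere zero), $\Phi^*D=((\Phi_{\bar z}+(\mu\circ\Phi)\overline{\Phi_z})/K,\ J(\mathcal{A}\circ\Phi)/K,\ J(\mathcal{B}\circ\Phi)/K,\ J(\mathcal{F}\circ\Phi)/K)$. *)

(* Defs.v *)
From Stdlib Require Import Reals.
From Coquelicot Require Import Coquelicot.
Open Scope C_scope.

Definition Cconnected (O : C -> Prop) : Prop :=
  forall U V : C -> Prop, @open C_UniformSpace U -> @open C_UniformSpace V ->
    (forall z, O z -> U z \/ V z) ->
    (forall z, O z -> U z -> V z -> False) ->
    (exists z, O z /\ U z) -> (exists z, O z /\ V z) -> False.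

Definition is_domain (O : C -> Prop) : Prop :=
  @open C_UniformSpace O /\ Cconnected O.

Definition dx_re (f : C -> C) (z : C) : R := Derive (fun t => fst (f (z + (t, 0%R)))) 0.
Definition dx_im (f : C -> C) (z : C) : R := Derive (fun t => snd (f (z + (t, 0%R)))) 0.
Definition dy_re (f : C -> C) (z : C) : R := Derive (fun t => fst (f (z + (0%R, t)))) 0.
Definition dy_im (f : C -> C) (z : C) : R := Derive (fun t => snd (f (z + (0%R, t)))) 0.

Definition f_x (f : C -> C) (z : C) : C := (dx_re f z, dx_im f z).
Definition f_y (f : C -> C) (z : C) : C := (dy_re f z, dy_im f z).

Definition dz (f : C -> C) (z : C) : C := (f_x f z - Ci * f_y f z) / 2.
Definition dzb (f : C -> C) (z : C) : C := (f_x f z + Ci * f_y f z) / 2.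

Definition C1_on (O : C -> Prop) (f : C -> C) : Prop :=
  forall z, O z ->
    ex_derive (fun t => fst (f (z + (t, 0%R)))) 0 /\
    ex_derive (fun t => snd (f (z + (t, 0%R)))) 0 /\
    ex_derive (fun t => fst (f (z + (0%R, t)))) 0 /\
    ex_derive (fun t => snd (f (z + (0%R, t)))) 0 /\
    @continuous C_UniformSpace R_UniformSpace (dx_re f) z /\
    @continuous C_UniformSpace R_UniformSpace (dx_im f) z /\
    @continuous C_UniformSpace R_UniformSpace (dy_re f) z /\
    @continuous C_UniformSpace R_UniformSpace (dy_im f) z.

(* Coefficient data (mu, A, B, F) of w_zbar - mu w_z + A w + B conj w = F *)
Record BVdata := mkBV { bv_mu : C -> C; bv_A : C -> C; bv_B : C -> C; bv_F : C -> C }.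

Definition in_BV (O : C -> Prop) (D : BVdata) : Prop :=
  forall z, O z ->
    @continuous C_UniformSpace C_UniformSpace (bv_mu D) z /\
    @continuous C_UniformSpace C_UniformSpace (bv_A D) z /\
    @continuous C_UniformSpace C_UniformSpace (bv_B D) z /\
    @continuous C_UniformSpace C_UniformSpace (bv_F D) z /\
    (Cmod (bv_mu D z) < 1)%R.

Definition is_gauge (O : C -> Prop) (phi : C -> C) : Prop :=
  C1_on O phi /\ forall z, O z -> phi z <> 0.

Definition gauge_act (phi : C -> C) (D : BVdata) : BVdata :=
  mkBV (bv_mu D)
       (fun z => bv_A D z - dzb phi z / phi z + bv_mu D z * dz phi z / phi z)
       (fun z => bv_B D z * phi z / Cconj (phi z))
       (fun z => phi z * bv_F D z).

Definition Jac (Phi : C -> C) (z : C) : R :=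
  (Cmod (dz Phi z) ^ 2 - Cmod (dzb Phi z) ^ 2)%R.

Definition is_diffeo (O1 O2 : C -> Prop) (Phi : C -> C) : Prop :=
  exists Psi : C -> C,
    C1_on O1 Phi /\ C1_on O2 Psi /\
    (forall z, O1 z -> O2 (Phi z)) /\ (forall w, O2 w -> O1 (Psi w)) /\
    (forall z, O1 z -> Psi (Phi z) = z) /\ (forall w, O2 w -> Phi (Psi w) = w) /\
    (forall z, O1 z -> (0 < Jac Phi z)%R).

Definition Kfac (Phi : C -> C) (D : BVdata) (z : C) : C :=
  dz Phi z + bv_mu D (Phi z) * Cconj (dzb Phi z).

Definition pullback (Phi : C -> C) (D : BVdata) : BVdata :=
  mkBV (fun z => (dzb Phi z + bv_mu D (Phi z) * Cconj (dz Phi z)) / Kfac Phi D z)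
       (fun z => RtoC (Jac Phi z) * bv_A D (Phi z) / Kfac Phi D z)
       (fun z => RtoC (Jac Phi z) * bv_B D (Phi z) / Kfac Phi D z)
       (fun z => RtoC (Jac Phi z) * bv_F D (Phi z) / Kfac Phi D z).

(* The 2-form Theta_D = |B|^2/(1-|mu|^2) dx dy, represented by its coefficient *)
Definition Theta (D : BVdata) (z : C) : R :=
  (Cmod (bv_B D z) ^ 2 / (1 - Cmod (bv_mu D z) ^ 2))%R.

Definition pullback_form (Phi : C -> C) (f : C -> R) (z : C) : R :=
  (f (Phi z) * Jac Phi z)%R.

(* Main.v *)
Require Import Defs.
From Stdlib Require Import Reals Lra.
From Coquelicot Require Import Coquelicot.
Open Scope C_scope.
Lemma Cmod2 (x : C) : (Cmod x ^ 2 = fst x * fst x + snd x * snd x)%R.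
Proof. destruct x as [x1 x2]; unfold Cmod; simpl fst; simpl snd. rewrite pow2_sqrt; [ring| nra]. Qed.
Lemma Cmod2_div (x y : C) : y <> 0 -> (Cmod (x / y) ^ 2 = Cmod x ^ 2 / Cmod y ^ 2)%R.
Proof. intros H. rewrite Cmod_div by auto. unfold Rdiv. rewrite Rpow_mult_distr, pow_inv. reflexivity. Qed.
Lemma Cmod2_mult (x y : C) : (Cmod (x * y) ^ 2 = Cmod x ^ 2 * Cmod y ^ 2)%R.
Proof. rewrite Cmod_mult. ring. Qed.
Lemma key (a b m : C) :
  (Cmod (a + m * Cconj b) ^ 2 - Cmod (b + m * Cconj a) ^ 2 =
   (Cmod a ^ 2 - Cmod b ^ 2) * (1 - Cmod m ^ 2))%R.
Proof. rewrite !Cmod2. destruct a, b, m; simpl. ring. Qed.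
Lemma Cmod2_pos (x : C) : x <> 0 -> (0 < Cmod x ^ 2)%R.
Proof. intros H. apply pow_lt. apply Cmod_gt_0; auto. Qed.
Lemma Cmod2_ge0 (x : C) : (0 <= Cmod x ^ 2)%R.
Proof. apply pow_le, Cmod_ge_0. Qed.

Theorem theorem8p2 :
  (forall (O : C -> Prop) (phi : C -> C) (D : BVdata),
      is_domain O -> is_gauge O phi -> in_BV O D ->
      forall z, O z -> Theta (gauge_act phi D) z = Theta D z) /\
  (forall (O1 O2 : C -> Prop) (Phi : C -> C) (D : BVdata),
      is_domain O1 -> is_domain O2 -> is_diffeo O1 O2 Phi -> in_BV O2 D ->
      forall z, O1 z -> Theta (pullback Phi D) z = pullback_form Phi (Theta D) z).
Proof.
  split.
  - intros O phi D _ [_ Hnz] _ z Hz. unfold Theta, gauge_act; cbn [bv_B bv_mu].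
    assert (Hc : Cconj (phi z) <> 0).
    { intro E. apply (Hnz z Hz). rewrite <- (Cconj_conj (phi z)), E.
      apply injective_projections; simpl; ring. }
    rewrite Cmod2_div by auto. rewrite Cmod2_mult, Cmod_conj.
    f_equal. pose proof (Cmod2_pos _ (Hnz z Hz)). field. apply Rgt_not_eq, Cmod_gt_0, Hnz, Hz.
  - intros O1 O2 Phi D _ _ [Psi [_ [_ [HPO [_ [_ [_ HJ]]]]]]] HBV z Hz.
    pose proof (HJ z Hz) as J0. specialize (HBV _ (HPO z Hz)).
    destruct HBV as [_ [_ [_ [_ Hm]]]].
    unfold Theta, pullback, pullback_form, Kfac in *; cbn [bv_B bv_mu].
    unfold Jac in *.
    set (a := dz Phi z) in *. set (b := dzb Phi z) in *.
    set (m := bv_mu D (Phi z)) in *. set (B := bv_B D (Phi z)).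
    pose proof (key a b m) as HK.
    assert (Hm2 : (Cmod m ^ 2 < 1)%R).
    { pose proof (Cmod_ge_0 m). nra. }
    assert (HKp : (0 < Cmod (a + m * Cconj b) ^ 2)%R).
    { pose proof (Cmod2_ge0 (b + m * Cconj a)). nra. }
    assert (HK0 : a + m * Cconj b <> 0).
    { intro E. rewrite E, Cmod_0 in HKp. lra. }
    rewrite !Cmod2_div by auto. rewrite Cmod2_mult, Cmod_R.
    replace (Cmod (b + m * Cconj a) ^ 2)%R with
      (Cmod (a + m * Cconj b) ^ 2 - (Cmod a ^ 2 - Cmod b ^ 2) * (1 - Cmod m ^ 2))%R by lra.
    rewrite Rabs_pos_eq by lra.
    assert (Hp : (0 < (Cmod a ^ 2 - Cmod b ^ 2) * (1 - Cmod m ^ 2))%R) by (apply Rmult_lt_0_compat; lra).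
    field. repeat split; try lra; apply Rgt_not_eq, Cmod_gt_0, HK0.
Qed.
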